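(* In a strongly causal, digitalizable OPT, for every $\rho\in\mathsf{St}_1(\mathrm{A})$ one has $I(\rho)\ge I^C(\rho)$.
   Context: Framework (operational probabilistic theory, OPT): each system $\mathrm{A}$ has states $\mathsf{St}(\mathrm{A})$ (normalized ones $\mathsf{St}_1(\mathrm{A})$), effects $\mathsf{Eff}(\mathrm{A})$, transformations $\mathsf{Tr}(\mathrm{A}\to\mathrm{B})$ (channels $\mathsf{Tr}_1$), sequential ($\circ$) and parallel ($\boxtimes$) composition, pairing $(a|\rho)$. Strong causality: for every test $\{\mathcal A_i\}$ and tests $\{\mathcal B^i_j\}_j$, $\{\mathcal B^i_j\circ\mathcal A_i\}$ is a test; unique deterministic effect $e_{\mathrm{A}}$. Operational norm $\|\delta\|_{\rm op}:=\sup_{a\in\mathsf{Eff}(\mathrm{A})}((2a-e_{\mathrm{A}})|\delta)$. A refinement of a state $\Omega$ is a collection of states contained in a preparation test summing to $\Omega$. A dilation of $\rho\in\mathsf{St}(\mathrm{A})$ is $\Psi\in\mathsf{St}(\mathrm{A}\mathrm{C})$ with $(\mathcal I_{\mathrm{A}}\boxtimes e_{\mathrm{C}})\Psi=\rho$. Digitalizability: there is an obit system $\mathrm{O}$ such that every system $\mathrm{X}$ can be perfectly encoded via channels into $\mathrm{O}^{\boxtimes k}$ for some finite $k$. Information content: compression scheme $\mathcal E\in\mathsf{Tr}_1(\mathrm{A}^{\boxtimes N}\to\mathrm{O}^{\boxtimes M})$, $\mathcal D\in\mathsf{Tr}_1(\mathrm{O}^{\boxtimes M}\to\mathrm{A}^{\boxtimes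 N})$; $E_{N,M,\varepsilon}(\rho)$ is the set of schemes with $\sup_{\mathrm{C},\{\Psi_i\}}\sum_i\|((\mathcal D\circ\mathcal E)\boxtimes\mathcal I_{\mathrm{C}})\Psi_i-\Psi_i\|_{\rm op}<\varepsilon$, over all systems $\mathrm{C}$ and refinements $\{\Psi_i\}\subseteq\mathsf{St}(\mathrm{A}^{\boxtimes N}\mathrm{C})$ of dilations of $\rho^{\boxtimes N}$; $I(\rho):=\lim_{\varepsilon\to0}\limsup_{N\to\infty}\min\{M:E_{N,M,\varepsilon}(\rho)\ne\emptyset\}/N$. Classical version $I^C$: for a compression scheme $(\mathcal E,\mathcal D)$, a system $\mathrm{C}$, a preparation test $\{\Psi_i\}_{i=1}^n$ of $\mathrm{A}^{\boxtimes N}\mathrm{C}$ with $\sum_i\Psi_i$ a dilation of $\rho^{\boxtimes N}$, and an observation test $\{a_j\}_{j=1}^m$ of $\mathrm{A}^{\boxtimes N}\mathrm{C}$, set $p_{ij}:=(a_j|\Psi_i)$, $q_{ij}:=(a_j|((\mathcal D\circ\mathcal E)\boxtimes\mathcal I_{\mathrm{C}})\Psi_i)$, and let $I(X:Y)=\sum_{ij}p_{ij}\log_2\frac{p_{ij}}{p^X_ip^Y_j}$, $I(X:\tilde Y)=\sum_{ij}q_{ij}\log_2\frac{q_{ij}}{q^X_iq^{\tilde Y}_j}$ be the Shannon mutual informations (marginals $p^X,p^Y,q^X=p^X,q^{\tilde Y}$). $E^C_{N,M,\delta}(\rho)$ is the set of schemes with $\sup_{\mathrm{C},\{\Psi_i\},\{a_j\}}L^{-1}|I(X:Y)-I(X:\tilde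 Y)|<\delta$, where $L=\log_2(mn-1)$ (cases with $m=1$ or $n=1$ give zero difference and are disregarded). $R^C_{\delta,N}(\rho):=\min\{M:E^C_{N,M,\delta}(\rho)\ne\emptyset\}/N$, $R^C_\delta(\rho):=\limsup_{N\to\infty}R^C_{\delta,N}(\rho)$, $I^C(\rho):=\lim_{\delta\to0}R^C_\delta(\rho)$. *)

(* Defs.v *)
From HB Require Import structures.
From mathcomp Require Import all_boot all_order all_algebra.
From mathcomp Require Import all_classical all_reals all_analysis.
Set Implicit Arguments. Unset Strict Implicit. Unset Printing Implicit Defensive.
Import Order.TTheory GRing.Theory Num.Theory.
Local Open Scope classical_set_scope.
Local Open Scope ring_scope.

(* Systems form a strict monoid under [tens] with unit [unitS] (the    *)
(* trivial system I).  [Tr A B] is the real vector space spanned by   *)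
(* the transformations (events) from A to B; the physical events are   *)
(* those that occur in some test.  [scal] identifies events of I -> I  *)
(* with real numbers (probabilities).                                  *)
Record OPTdata (R : realType) := MkOPTdata {
  sys : Type;
  unitS : sys;
  tens : sys -> sys -> sys;
  tens_unit_l : forall A, tens unitS A = A;
  tens_unit_r : forall A, tens A unitS = A;
  tens_assoc : forall A B C, tens A (tens B C) = tens (tens A B) C;
  Tr : sys -> sys -> lmodType R;
  idt : forall A, Tr A A;
  comp : forall A B C, Tr B C -> Tr A B -> Tr A C;
  par : forall A B C D, Tr A B -> Tr C D -> Tr (tens A C) (tens B D);
  scal : Tr unitS unitS -> R;
  test : forall A B, seq (Tr A B) -> Prop }.

Arguments unitS {R}.
Arguments tens {R}.
Arguments Tr {R}.
Arguments idt {R o} A.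
Arguments comp {R o A B C}.
Arguments par {R o A B C D}.
Arguments scal {R o}.
Arguments test {R o A B}.

Definition hcast (R : realType) (O : OPTdata R) (A A' B B' : sys O)
  (eA : A = A') (eB : B = B') (f : Tr O A B) : Tr O A' B' :=
  match eA in _ = A1, eB in _ = B1 return Tr O A1 B1 with
  | erefl, erefl => f end.

Definition coarse (R : realType) (O : OPTdata R) (A B : sys O)
  (s : seq (Tr O A B)) (k : nat) (f : nat -> nat) : seq (Tr O A B) :=
  [seq \sum_(i < size s | f i == j) s`_i | j <- iota 0 k].

Definition OPT_axioms (R : realType) (O : OPTdata R) : Prop :=
  (forall A B C D (f : Tr O C D) (g : Tr O B C) (h : Tr O A B),
      comp f (comp g h) = comp (comp f g) h) /\
  (forall A B (f : Tr O A B), comp (idt B) f = f /\ comp f (idt A) = f) /\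
  (forall A B C (a : R) (f f' : Tr O B C) (g : Tr O A B),
      comp (a *: f + f') g = a *: comp f g + comp f' g) /\
  (forall A B C (a : R) (f : Tr O B C) (g g' : Tr O A B),
      comp f (a *: g + g') = a *: comp f g + comp f g') /\
  (forall A B C D (a : R) (f f' : Tr O A B) (g : Tr O C D),
      par (a *: f + f') g = a *: par f g + par f' g) /\
  (forall A B C D (a : R) (f : Tr O A B) (g g' : Tr O C D),
      par f (a *: g + g') = a *: par f g + par f g') /\
  (forall A B C D E F (f : Tr O B C) (f' : Tr O A B)
          (g : Tr O E F) (g' : Tr O D E),
      par (comp f f') (comp g g') = comp (par f g) (par f' g')) /\
  (forall A B, par (idt A) (idt B) = idt (tens O A B)) /\
  (forall (a : R) (x y : Tr O (unitS O) (unitS O)),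
      scal (a *: x + y) = a * scal x + scal y) /\
  (forall A : sys O, test [:: idt A]) /\
  (forall A B C (s : seq (Tr O A B)) (t : seq (Tr O B C)),
      test s -> test t -> test [seq comp y x | x <- s, y <- t]) /\
  (forall A B C D (s : seq (Tr O A B)) (t : seq (Tr O C D)),
      test s -> test t -> test [seq par x y | x <- s, y <- t]) /\
  (forall A B (s : seq (Tr O A B)) (k : nat) (f : nat -> nat),
      test s -> (forall i, i < size s -> f i < k)%N ->
      (forall j, j < k -> exists2 i, (i < size s)%N & f i = j)%N ->
      test (coarse s k f)) /\
  (forall s : seq (Tr O (unitS O) (unitS O)), test s ->
      (forall x, x \in s -> 0 <= scal x) /\ \sum_(x <- s) scal x = 1).

Section OPTnotions.
Variables (R : realType) (O : OPTdata R).

Definition isEvent (A B : sys O) (f : Tr O A B) : Prop :=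
  exists s : seq (Tr O A B), test s /\ f \in s.
Definition St (A : sys O) : set (Tr O (unitS O) A) := [set r | isEvent r].
Definition Eff (A : sys O) : set (Tr O A (unitS O)) := [set a | isEvent a].
(* deterministic transformations = channels; normalized states *)
Definition channel (A B : sys O) (f : Tr O A B) : Prop := test [:: f].
Definition St1 (A : sys O) : set (Tr O (unitS O) A) := [set r | channel r].

Definition unique_det_effects (e : forall A : sys O, Tr O A (unitS O)) : Prop :=
  forall A, channel (e A) /\ (forall a : Tr O A (unitS O), channel a -> a = e A).

(* strong causality: conditional tests are tests, unique det. effect *)
Definition StronglyCausal (e : forall A : sys O, Tr O A (unitS O)) : Prop :=
  (forall (A B C : sys O) (s : seq (Tr O A B)) (t : nat -> seq (Tr O B C)),
     test s -> (forall i, i < size s -> test (t i))%N ->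
     test (flatten [seq [seq comp y s`_i | y <- t i] | i <- iota 0 (size s)]))
  /\ unique_det_effects e.

Fixpoint sysPow (A : sys O) (N : nat) : sys O :=
  if N is N'.+1 then tens O (sysPow A N') A else unitS O.

Fixpoint statePow (A : sys O) (rho : Tr O (unitS O) A) (N : nat)
  : Tr O (unitS O) (sysPow A N) :=
  if N is N'.+1 then
    hcast (tens_unit_l (unitS O)) erefl (par (statePow rho N') rho)
  else idt (unitS O).

Definition digitalizable (Ob : sys O) : Prop :=
  forall X : sys O, exists k (E : Tr O X (sysPow Ob k)) (D : Tr O (sysPow Ob k) X),
    [/\ channel E, channel D & comp D E = idt X].

Variable e : forall A : sys O, Tr O A (unitS O).

Definition pairing (A : sys O) (a : Tr O A (unitS O)) (r : Tr O (unitS O) A) : R :=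
  scal (comp a r).

Definition opnorm (A : sys O) (d : Tr O (unitS O) A) : \bar R :=
  ereal_sup [set (pairing (2%:R *: a - e A) d)%:E | a in Eff (A:=A)].

Definition dilation (A C : sys O) (rho : Tr O (unitS O) A)
  (Psi : Tr O (unitS O) (tens O A C)) : Prop :=
  St Psi /\ hcast erefl (tens_unit_r A) (comp (par (idt A) (e C)) Psi) = rho.

Definition refinement (X : sys O) (s : seq (Tr O (unitS O) X))
  (Omega : Tr O (unitS O) X) : Prop :=
  (exists (t : seq (Tr O (unitS O) X)) (m : bitseq), test t /\ s = mask m t)
  /\ \sum_(x <- s) x = Omega.

Variable Ob : sys O.

Definition qerror (A : sys O) (rho : Tr O (unitS O) A) (N M : nat)
  (E : Tr O (sysPow A N) (sysPow Ob M)) (D : Tr O (sysPow Ob M) (sysPow A N))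
  : \bar R :=
  ereal_sup [set x | exists (C : sys O) (Omega : Tr O (unitS O) (tens O (sysPow A N) C))
                           (s : seq (Tr O (unitS O) (tens O (sysPow A N) C))),
     [/\ dilation (statePow rho N) Omega, refinement s Omega &
         x = \sum_(P <- s) opnorm (comp (par (comp D E) (idt C)) P - P)]].

Definition Eset (A : sys O) (rho : Tr O (unitS O) A) (N M : nat) (eps : R) : Prop :=
  exists (E : Tr O (sysPow A N) (sysPow Ob M)) (D : Tr O (sysPow Ob M) (sysPow A N)),
    [/\ channel E, channel D & (qerror rho E D < eps%:E)%E].

Definition rateQ (A : sys O) (rho : Tr O (unitS O) A) (eps : R) (N : nat) : \bar R :=
  (ereal_inf [set (M%:R)%:E | M in [set M | Eset rho N M eps]] * (N%:R^-1)%:E)%E.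

Definition infoQ (A : sys O) (rho : Tr O (unitS O) A) : \bar R :=
  lim ((limn_esup (rateQ rho eps)) @[eps --> 0^'+]).

Definition log2 (x : R) : R := ln x / ln 2.

Definition mutinf (n m : nat) (p : nat -> nat -> R) : R :=
  \sum_(i < n) \sum_(j < m)
    (if p i j == 0 then 0
     else p i j * log2 (p i j / ((\sum_(j' < m) p i j') * (\sum_(i' < n) p i' j)))).

Definition cerrorTerm (A C : sys O) (N M : nat)
  (E : Tr O (sysPow A N) (sysPow Ob M)) (D : Tr O (sysPow Ob M) (sysPow A N))
  (s : seq (Tr O (unitS O) (tens O (sysPow A N) C)))
  (t : seq (Tr O (tens O (sysPow A N) C) (unitS O))) : R :=
  let n := size s in let m := size t in
  let p := fun i j => pairing t`_j s`_i in
  let q := fun i j => pairing t`_j (comp (par (comp D E) (idt C)) s`_i) in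
  `|mutinf n m p - mutinf n m q| / log2 ((m * n)%:R - 1).

Definition cerror (A : sys O) (rho : Tr O (unitS O) A) (N M : nat)
  (E : Tr O (sysPow A N) (sysPow Ob M)) (D : Tr O (sysPow Ob M) (sysPow A N))
  : \bar R :=
  ereal_sup [set x | exists (C : sys O)
                           (s : seq (Tr O (unitS O) (tens O (sysPow A N) C)))
                           (t : seq (Tr O (tens O (sysPow A N) C) (unitS O))),
     [/\ test s, dilation (statePow rho N) (\sum_(P <- s) P), test t,
         (2 <= size s)%N && (2 <= size t)%N &
         x = (cerrorTerm E D s t)%:E]].

Definition EsetC (A : sys O) (rho : Tr O (unitS O) A) (N M : nat) (delta : R) : Prop :=
  exists (E : Tr O (sysPow A N) (sysPow Ob M)) (D : Tr O (sysPow Ob M) (sysPow A N)),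
    [/\ channel E, channel D & (cerror rho E D < delta%:E)%E].

Definition rateC (A : sys O) (rho : Tr O (unitS O) A) (delta : R) (N : nat) : \bar R :=
  (ereal_inf [set (M%:R)%:E | M in [set M | EsetC rho N M delta]] * (N%:R^-1)%:E)%E.

Definition infoC (A : sys O) (rho : Tr O (unitS O) A) : \bar R :=
  lim ((limn_esup (rateC rho delta)) @[delta --> 0^'+]).

End OPTnotions.

(* Main.v *)
Require Import Defs.
From HB Require Import structures.
From mathcomp Require Import all_boot all_order all_algebra.
From mathcomp Require Import all_classical all_reals all_analysis.
From mathcomp Require Import ring lra.
Require Import Defs.
Set Implicit Arguments. Unset Strict Implicit. Unset Printing Implicit Defensive.
Import Order.TTheory GRing.Theory Num.Theory.
Section RealPart.
Local Open Scope ring_scope.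
Variable R : realType.

Definition phi (x : R) := x * ln x.

Lemma ln_le_sub1 (x : R) : 0 < x -> ln x <= x - 1.
Proof.
move=> x0; have := @le_ln1Dx R (x - 1); rewrite addrCA subrr addr0; apply; lra.
Qed.

Lemma phi0 : phi 0 = 0.
Proof. by rewrite /phi mul0r. Qed.

Lemma phi_diff_le (x y : R) : 0 <= x -> x <= y -> y <= 1 ->
  `|phi y - phi x| <= (y - x) - (y - x) * ln (y - x).
Proof.
move=> x0 xy y1.
have [yx|yx] := eqVneq (y - x) 0.
  have -> : y = x by apply/eqP; rewrite -subr_eq0 yx.
  by rewrite !subrr normr0 mul0r subrr.
have t0 : 0 < y - x by rewrite lt_def yx /= subr_ge0.
have y0 : 0 < y by lra.
have lny : ln y <= 0 by apply: ln_le0.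
have lnt : ln (y - x) <= ln y by rewrite ler_ln ?posrE //; lra.
have [->|xn0] := eqVneq x 0.
  rewrite phi0 subr0 subr0 /phi.
  have : y * ln y <= 0 by rewrite mulr_ge0_le0 //; lra.
  move=> h; rewrite ler0_norm //; nra.
have xp : 0 < x by rewrite lt_def xn0.
have lnyx : ln y - ln x <= (y - x) / x.
  rewrite -ln_div ?posrE //; apply: le_trans (ln_le_sub1 (divr_gt0 y0 xp)) _.
  by rewrite mulrBl divff ?gt_eqF // le_refl.
have lnxy : ln x <= ln y by rewrite ler_ln ?posrE //.
have h1 : x * (ln y - ln x) <= y - x.
  have := lnyx; rewrite -(ler_pM2l xp) => hh; apply: le_trans hh _.
  by rewrite mulrCA divff ?gt_eqF // mulr1.
have h2 : 0 <= x * (ln y - ln x) by apply: mulr_ge0; lra.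
have e : phi y - phi x = (y - x) * ln y + x * (ln y - ln x) by rewrite /phi; ring.
rewrite e.
have h3 : (y - x) * ln (y - x) <= (y - x) * ln y by rewrite ler_pM2l.
have h4 : (y - x) * ln y <= 0 by rewrite mulr_ge0_le0 //; lra.
have h5 : (y - x) * ln (y - x) <= 0 by lra.
rewrite ler_norml; apply/andP; split; lra.
Qed.

Definition psi (t : R) := t - t * ln t.

Lemma phi_diff (x y : R) : 0 <= x <= 1 -> 0 <= y <= 1 ->
  `|phi y - phi x| <= psi `|y - x|.
Proof.
move=> /andP[x0 x1] /andP[y0 y1].
have [xy|yx] := leP x y.
  by rewrite [`|y - x|]ger0_norm ?subr_ge0 //; apply: phi_diff_le.
rewrite /psi distrC [`|y - x|]distrC [`|x - y|]ger0_norm ?subr_ge0//; last exact: ltW.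
by apply: phi_diff_le => //; apply: ltW.
Qed.

Lemma pointwise_bound (t tau d : R) : 0 <= t -> 0 < tau -> 0 < d ->
  - (t * ln t) <= t * ln d - t * ln tau + tau / d - t.
Proof.
move=> t0 tau0 d0.
have [->|tn0] := eqVneq t 0.
  rewrite !mul0r; have : 0 <= tau / d by rewrite divr_ge0 // ltW.
  lra.
have tp : 0 < t by rewrite lt_def tn0.
have u0 : 0 < tau / (d * t) by rewrite divr_gt0 // mulr_gt0.
have := ln_le_sub1 u0.
rewrite ln_div ?posrE ?mulr_gt0 // lnM ?posrE // => h.
have := h; rewrite -(ler_pM2l tp) => h'.
have e : t * (tau / (d * t) - 1) = tau / d - t.
  by field; rewrite gt_eqF // gt_eqF.
rewrite e in h'; lra.
Qed.

Lemma tau_bound (tau a : R) : 0 < tau -> 0 < a ->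
  - (tau * ln tau) <= a^-1 + tau * ln a.
Proof.
move=> t0 a0.
have u0 : 0 < (tau * a)^-1 by rewrite invr_gt0 mulr_gt0.
have := ln_le_sub1 u0.
rewrite lnV ?posrE ?mulr_gt0 // lnM ?posrE // => h.
have := h; rewrite -(ler_pM2l t0) => h'.
have e : tau * ((tau * a)^-1 - 1) = a^-1 - tau.
  by field; rewrite gt_eqF // gt_eqF.
rewrite e in h'; lra.
Qed.
Lemma psi0 : psi 0 = 0.
Proof. by rewrite /psi mul0r subrr. Qed.

Lemma entropy_bound (I : finType) (v w : I -> R) (a : R) :
  (forall k, 0 <= v k <= 1) -> (forall k, 0 <= w k <= 1) -> 1 <= a ->
  (0 < #|I|)%N ->
  `|\sum_k phi (v k) - \sum_k phi (w k)| <=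
    (\sum_k `|v k - w k|) + (\sum_k `|v k - w k|) * ln (#|I|%:R)
    + a^-1 + (\sum_k `|v k - w k|) * ln a.
Proof.
move=> hv hw a1 I0.
set tau := \sum_k `|v k - w k|.
have a0 : 0 < a by lra.
have lna : 0 <= ln a by apply: ln_ge0.
have dpos : 0 < (#|I|%:R : R) by rewrite ltr0n.
have lnd : 0 <= ln (#|I|%:R : R) by apply: ln_ge0; rewrite ler1n.
have tau0 : 0 <= tau by rewrite sumr_ge0.
have step1 : `|\sum_k phi (v k) - \sum_k phi (w k)| <= \sum_k psi `|v k - w k|.
  rewrite -sumrB; apply: le_trans (ler_norm_sum _ _ _) _.
  apply: ler_sum => k _; rewrite distrC [`|v k - w k|]distrC; exact: phi_diff.
apply: le_trans step1 _.
have ai : 0 <= a^-1 by rewrite invr_ge0 ltW.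
have [t0|tpos] := eqVneq tau 0.
  have allz : forall k, `|v k - w k| = 0.
    move=> k; apply/eqP; move: t0; rewrite /tau => /eqP.
    by rewrite psumr_eq0 // => /allP /(_ k (mem_index_enum k)) /implyP; apply.
  under eq_bigr do rewrite allz psi0.
  rewrite big1 // t0 !mul0r; lra.
have tp : 0 < tau by rewrite lt_def tpos.
have step2 : \sum_k psi `|v k - w k| <= \sum_k
   (`|v k - w k| + (`|v k - w k| * ln (#|I|%:R) - `|v k - w k| * ln tau
      + tau / #|I|%:R - `|v k - w k|)).
  apply: ler_sum => k _; rewrite /psi.
  have := pointwise_bound (normr_ge0 (v k - w k)) tp dpos; lra.
apply: le_trans step2 _.
rewrite big_split /= !big_split /= sumrN sumr_const -!mulr_suml -/tau.
have e : tau / #|I|%:R *+ #|I| = tau.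
  rewrite -mulr_natr mulrAC -mulrA divff ?mulr1 //; exact: lt0r_neq0.
rewrite e.
rewrite sumrN -/tau; have := tau_bound tp a0; lra.
Qed.

Lemma le_sum_entry (I : finType) (F : I -> R) k :
  (forall i, 0 <= F i) -> F k <= \sum_i F i.
Proof.
move=> h; rewrite (bigD1 k) //= lerDl; apply: sumr_ge0 => i _; exact: h.
Qed.

Lemma mutinf_decomp n m (p : nat -> nat -> R) :
  (forall i j, (i < n)%N -> (j < m)%N -> 0 <= p i j) ->
  mutinf n m p * ln 2 =
    \sum_(i < n) \sum_(j < m) phi (p i j)
    - \sum_(i < n) phi (\sum_(j < m) p i j)
    - \sum_(j < m) phi (\sum_(i < n) p i j).
Proof.
move=> hp.
have l2 : ln (2 : R) != 0 by rewrite gt_eqF // ln_gt0 // ltr1n.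
rewrite /mutinf mulr_suml.
have e1 : forall (i : 'I_n) (j : 'I_m),
  (if p i j == 0 then 0 else p i j * log2 (p i j / ((\sum_(j' < m) p i j') *
     (\sum_(i' < n) p i' j)))) * ln 2
  = phi (p i j) - p i j * ln (\sum_(j' < m) p i j')
    - p i j * ln (\sum_(i' < n) p i' j).
  move=> i j.
  have [->|pn0] := eqVneq (p i j) 0; first by rewrite /phi !mul0r !subrr.
  have pp : 0 < p i j by rewrite lt_def pn0 hp.
  have rp : 0 < \sum_(j' < m) p i j'.
    apply: lt_le_trans pp _.
    exact: (@le_sum_entry _ (fun j0 : 'I_m => p i j0) j (fun j0 => hp _ _ (ltn_ord i) (ltn_ord j0))).
  have cp : 0 < \sum_(i' < n) p i' j.
    apply: lt_le_trans pp _.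
    exact: (@le_sum_entry _ (fun i0 : 'I_n => p i0 j) i (fun i0 => hp _ _ (ltn_ord i0) (ltn_ord j))).
  rewrite /log2 /phi ln_div ?posrE ?mulr_gt0 // lnM ?posrE //.
  by field.
under eq_bigr do rewrite mulr_suml.
under eq_bigr do under eq_bigr do rewrite e1.
under eq_bigr do rewrite !sumrB.
rewrite !sumrB; congr (_ - _ - _).
  by apply: eq_bigr => i _; rewrite /phi mulr_suml.
rewrite exchange_big /=; apply: eq_bigr => j _; rewrite /phi mulr_suml.
by [].
Qed.

Definition fval (a tau d : R) := tau + tau * ln d + a^-1 + tau * ln a.

Lemma fval_mono (a t1 t2 d1 d2 : R) : 1 <= a -> 0 <= t1 <= t2 -> 1 <= d1 <= d2 ->
  fval a t1 d1 <= fval a t2 d2.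
Proof.
move=> a1 /andP[t10 t12] /andP[d11 d12].
have lna : 0 <= ln a by apply: ln_ge0.
have l1 : 0 <= ln d1 by apply: ln_ge0.
have l12 : ln d1 <= ln d2 by rewrite ler_ln ?posrE //; lra.
rewrite /fval.
have h1 : t1 * ln d1 <= t2 * ln d2 by apply: ler_pM.
have h2 : t1 * ln a <= t2 * ln a by apply: ler_wpM2r.
lra.
Qed.

Lemma mutinf_bound n m (p q : nat -> nat -> R) (a : R) :
  (0 < n)%N -> (0 < m)%N -> 1 <= a ->
  (forall i j, (i < n)%N -> (j < m)%N -> 0 <= p i j) ->
  (forall i j, (i < n)%N -> (j < m)%N -> 0 <= q i j) ->
  \sum_(i < n) \sum_(j < m) p i j = 1 -> \sum_(i < n) \sum_(j < m) q i j = 1 ->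
  `|mutinf n m p - mutinf n m q| * ln 2 <=
    3 * fval a (\sum_(i < n) \sum_(j < m) `|p i j - q i j|) (n * m)%:R.
Proof.
move=> n0 m0 a1 hp hq sp sq.
set tau := \sum_(i < n) \sum_(j < m) `|p i j - q i j|.
have tau0 : 0 <= tau by apply: sumr_ge0 => i _; apply: sumr_ge0.
have l2 : 0 < ln (2 : R) by rewrite ln_gt0 // ltr1n.
have dnm : (1 : R) <= (n * m)%:R by rewrite ler1n muln_gt0 n0.
have ub : forall (f : nat -> nat -> R),
    (forall i j, (i < n)%N -> (j < m)%N -> 0 <= f i j) ->
    \sum_(i < n) \sum_(j < m) f i j = 1 ->
    [/\ forall (i : 'I_n) (j : 'I_m), 0 <= f i j <= 1,
        forall i : 'I_n, 0 <= \sum_(j < m) f i j <= 1 &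
        forall j : 'I_m, 0 <= \sum_(i < n) f i j <= 1].
  move=> f hf sf.
  have hf' : forall (i : 'I_n) (j : 'I_m), 0 <= f i j.
    by move=> i j; apply: hf.
  have r1 : forall i : 'I_n, \sum_(j < m) f i j <= 1.
    move=> i; rewrite -sf.
    apply: (@le_sum_entry _ (fun i0 : 'I_n => \sum_(j < m) f i0 j)) => i0.
    by apply: sumr_ge0 => j _.
  split.
  - move=> i j; rewrite hf' /=; apply: le_trans (r1 i).
    exact: (@le_sum_entry _ (fun j0 : 'I_m => f i j0)).
  - by move=> i; rewrite r1 andbT; apply: sumr_ge0 => j _.
  - move=> j; apply/andP; split; first by apply: sumr_ge0 => i _.
    rewrite -sf exchange_big /=.
    apply: (@le_sum_entry _ (fun j0 : 'I_m => \sum_(i < n) f i j0)) => j0.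
    by apply: sumr_ge0 => i _.
have [pA pB pC] := ub p hp sp.
have [qA qB qC] := ub q hq sq.
have -> : `|mutinf n m p - mutinf n m q| * ln 2 =
   `|mutinf n m p * ln 2 - mutinf n m q * ln 2|.
  by rewrite -mulrBl normrM (gtr0_norm l2).
rewrite (mutinf_decomp hp) (mutinf_decomp hq).
set A1 := \sum_(i < n) \sum_(j < m) phi (p i j).
set A2 := \sum_(i < n) \sum_(j < m) phi (q i j).
set B1 := \sum_(i < n) phi _.
set B2 := \sum_(i < n) phi _.
set C1 := \sum_(j < m) phi _.
set C2 := \sum_(j < m) phi _.
have tri : `|A1 - B1 - C1 - (A2 - B2 - C2)| <=
    `|A1 - A2| + `|B1 - B2| + `|C1 - C2|.
  have -> : A1 - B1 - C1 - (A2 - B2 - C2) = (A1 - A2) - (B1 - B2) - (C1 - C2)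
    by ring.
  apply: le_trans (ler_normB _ _) _; rewrite lerD2r.
  exact: ler_normB.
apply: le_trans tri _.
have hA : `|A1 - A2| <= fval a tau (n * m)%:R.
  rewrite /A1 /A2 !pair_bigA /=.
  have := @entropy_bound _ (fun ij : 'I_n * 'I_m => p ij.1 ij.2)
     (fun ij => q ij.1 ij.2) a (fun k => pA k.1 k.2) (fun k => qA k.1 k.2) a1.
  rewrite card_prod !card_ord muln_gt0 n0 m0 => /(_ isT) h.
  have e : \sum_(k : 'I_n * 'I_m) `|p k.1 k.2 - q k.1 k.2| = tau by rewrite /tau pair_bigA.
  apply: le_trans h _; rewrite e /fval; lra.
have hB : `|B1 - B2| <= fval a tau (n * m)%:R.
  have := @entropy_bound _ (fun i : 'I_n => \sum_(j < m) p i j)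
     (fun i => \sum_(j < m) q i j) a pB qB a1.
  rewrite card_ord n0 => /(_ isT) h.
  apply: le_trans h _; rewrite -/(fval _ _ _).
  apply: fval_mono => //.
    rewrite sumr_ge0 //=; apply: ler_sum => i _.
    by rewrite -sumrB; apply: ler_norm_sum.
  by rewrite ler1n n0 /= ler_nat leq_pmulr.
have hC : `|C1 - C2| <= fval a tau (n * m)%:R.
  have := @entropy_bound _ (fun j : 'I_m => \sum_(i < n) p i j)
     (fun j => \sum_(i < n) q i j) a pC qC a1.
  rewrite card_ord m0 => /(_ isT) h.
  apply: le_trans h _; rewrite -/(fval _ _ _).
  apply: fval_mono => //.
    rewrite sumr_ge0 //= /tau exchange_big /=; apply: ler_sum => j _.
    by rewrite -sumrB; apply: ler_norm_sum.
  by rewrite ler1n m0 /= ler_nat leq_pmull.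
lra.
Qed.

Lemma core (delta : R) : 0 < delta -> exists2 eps : R, 0 < eps &
  forall n m (p q : nat -> nat -> R), (2 <= n)%N -> (2 <= m)%N ->
  (forall i j, (i < n)%N -> (j < m)%N -> 0 <= p i j) ->
  (forall i j, (i < n)%N -> (j < m)%N -> 0 <= q i j) ->
  \sum_(i < n) \sum_(j < m) p i j = 1 -> \sum_(i < n) \sum_(j < m) q i j = 1 ->
  \sum_(i < n) \sum_(j < m) `|p i j - q i j| < eps ->
  `|mutinf n m p - mutinf n m q| / log2 ((m * n)%:R - 1) <= delta / 2.
Proof.
move=> d0.
set c := ln (3 : R).
have c0 : 0 < c by rewrite ln_gt0 // ltr1n.
set a := 24 / (c * delta) + 1.
have a1 : 1 <= a by rewrite /a lerDr divr_ge0 // ltW // mulr_gt0.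
have a0 : 0 < a by lra.
have lna : 0 <= ln a by apply: ln_ge0.
set K := 3 / c + 6 + 3 * ln a / c.
have K0 : 0 < K.
  have : 0 <= 3 / c by rewrite divr_ge0 // ltW.
  have : 0 <= 3 * ln a / c by rewrite divr_ge0 ?mulr_ge0 // ltW.
  rewrite /K; lra.
exists (delta / (8 * K)); first by rewrite divr_gt0 // mulr_gt0.
move=> n m p q n2 m2 hp hq sp sq.
set tau := \sum_(i < n) \sum_(j < m) `|p i j - q i j|.
move=> taueps.
have tau0 : 0 <= tau by apply: sumr_ge0 => i _; apply: sumr_ge0.
have n0 : (0 < n)%N by apply: leq_trans n2.
have m0 : (0 < m)%N by apply: leq_trans m2.
have hX := mutinf_bound n0 m0 a1 hp hq sp sq; rewrite -/tau in hX.
set X := `|mutinf n m p - mutinf n m q| * ln 2 in hX.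
set x : R := (m * n)%:R - 1.
have x3 : 3 <= x.
  rewrite /x lerBrDr (_ : (3 : R) + 1 = 4%:R); last by lra.
  rewrite ler_nat; rewrite (_ : 4 = 2 * 2)%N //.
  by apply: leq_mul.
set L := ln x.
have cL : c <= L by rewrite /c /L ler_ln ?posrE //; lra.
have L0 : 0 < L by lra.
have lnnm : ln ((n * m)%:R : R) <= 2 * L.
  have -> : ((n * m)%:R : R) = x + 1 by rewrite /x subrK mulnC.
  have : x + 1 <= x ^+ 2 by rewrite expr2; nra.
  move=> hh.
  have h : ln (x + 1) <= ln (x ^+ 2).
    by rewrite ler_ln ?posrE ?exprn_gt0 //; lra.
  by rewrite lnXn in h; [rewrite -/L mulr2n in h; lra | lra].
have tK : tau * K <= delta / 8.
  have := taueps; rewrite ltr_pdivlMr ?mulr_gt0 // => h.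
  have e : tau * (8 * K) = 8 * (tau * K) by ring.
  rewrite e in h; lra.
have eK : c * (tau * K) = 3 * tau + 6 * tau * c + 3 * tau * ln a.
  by rewrite /K; field; rewrite gt_eqF.
have t6 : 6 * tau <= delta / 8.
  have : 0 <= tau * (3 / c) by rewrite mulr_ge0 // divr_ge0 // ltW.
  have : 0 <= tau * (3 * ln a / c) by rewrite mulr_ge0 // divr_ge0 ?mulr_ge0 // ltW.
  have e2 : tau * K = tau * (3 / c) + 6 * tau + tau * (3 * ln a / c) by rewrite /K; ring.
  lra.
have cK : c * (tau * K) <= c * (delta / 8) by rewrite ler_pM2l.
have tc : 0 <= tau * c by rewrite mulr_ge0 // ltW.
have hA : 3 / a <= c * delta / 8.
  rewrite ler_pdivrMr //.
  have e : c * delta / 8 * a = (24 + c * delta) / 8.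
    by rewrite /a; field; rewrite !gt_eqF.
  rewrite e; have : 0 < c * delta by rewrite mulr_gt0.
  lra.
have p1 : 6 * tau * L <= delta / 8 * L by rewrite ler_wpM2r // ltW.
have p2 : c * delta <= L * delta by rewrite ler_wpM2r // ltW.
have p3 : tau * ln ((n * m)%:R) <= tau * (2 * L) by rewrite ler_wpM2l.
have hXL : X <= delta / 2 * L.
  apply: le_trans hX _; rewrite /fval.
  have e3 : 3 * (tau + tau * ln (n * m)%:R + a^-1 + tau * ln a) =
            3 * tau + 3 * (tau * ln (n * m)%:R) + 3 / a + 3 * tau * ln a by ring.
  rewrite e3; nra.
rewrite /log2 -/L.
have l2 : 0 < ln (2 : R) by rewrite ln_gt0 // ltr1n.
have -> : `|mutinf n m p - mutinf n m q| / (L / ln 2) = X / L.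
  by rewrite /X; field; rewrite !gt_eqF.
by rewrite ler_pdivrMr.
Qed.

End RealPart.

Section OPTpart.
Local Open Scope ring_scope.
Local Open Scope classical_set_scope.
Variables (R : realType) (O : OPTdata R) (e : forall A : sys O, Tr O A (unitS O)).
Hypothesis HO : OPT_axioms O.
Hypothesis Hsc : StronglyCausal e.

Lemma comp_linl (A B C : sys O) (a : R) (f f' : Tr O B C) (g : Tr O A B) :
  comp (a *: f + f') g = a *: comp f g + comp f' g.
Proof. by case: HO => _ [_ [h _]]; apply: h. Qed.

Lemma comp_linr (A B C : sys O) (a : R) (f : Tr O B C) (g g' : Tr O A B) :
  comp f (a *: g + g') = a *: comp f g + comp f g'.
Proof. by case: HO => _ [_ [_ [h _]]]; apply: h. Qed.

Lemma comp_assoc (A B C D : sys O) (f : Tr O C D) (g : Tr O B C) (h : Tr O A B) :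
  comp f (comp g h) = comp (comp f g) h.
Proof. by case: HO => h0 _; apply: h0. Qed.

Lemma scal_lin (a : R) (x y : Tr O (unitS O) (unitS O)) :
  scal (a *: x + y) = a * scal x + scal y.
Proof. by case: HO => _ [_ [_ [_ [_ [_ [_ [_ [h _]]]]]]]]; apply: h. Qed.

Lemma test_idt (A : sys O) : test [:: idt A].
Proof. by case: HO => _ [_ [_ [_ [_ [_ [_ [_ [_ [h _]]]]]]]]]; apply: h. Qed.

Lemma test_seq (A B C : sys O) (s : seq (Tr O A B)) (t : seq (Tr O B C)) :
  test s -> test t -> test [seq comp y x | x <- s, y <- t].
Proof. by case: HO => _ [_ [_ [_ [_ [_ [_ [_ [_ [_ [h _]]]]]]]]]]; apply: h. Qed.

Lemma test_par (A B C D : sys O) (s : seq (Tr O A B)) (t : seq (Tr O C D)) :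
  test s -> test t -> test [seq par x y | x <- s, y <- t].
Proof. by case: HO => _ [_ [_ [_ [_ [_ [_ [_ [_ [_ [_ [h _]]]]]]]]]]]; apply: h. Qed.

Lemma test_coarse (A B : sys O) (s : seq (Tr O A B)) (k : nat) (f : nat -> nat) :
  test s -> (forall i, i < size s -> f i < k)%N ->
  (forall j, j < k -> exists2 i, (i < size s)%N & f i = j)%N ->
  test (coarse s k f).
Proof. by case: HO => _ [_ [_ [_ [_ [_ [_ [_ [_ [_ [_ [_ [h _]]]]]]]]]]]]; apply: h. Qed.

Lemma test_scal (s : seq (Tr O (unitS O) (unitS O))) : test s ->
  (forall x, x \in s -> 0 <= scal x) /\ \sum_(x <- s) scal x = 1.
Proof. by case: HO => _ [_ [_ [_ [_ [_ [_ [_ [_ [_ [_ [_ [_ h]]]]]]]]]]]]; apply: h. Qed.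

Lemma self_add (V : zmodType) (x : V) : x = x + x -> x = 0.
Proof. by move=> h; have := congr1 (fun y => y - x) h; rewrite subrr addrK. Qed.

Lemma comp0l (A B C : sys O) (g : Tr O A B) : comp (0 : Tr O B C) g = 0.
Proof.
have h := comp_linl 1 (0 : Tr O B C) 0 g; rewrite !scale1r !addr0 in h.
exact: self_add.
Qed.

Lemma compDl (A B C : sys O) (f f' : Tr O B C) (g : Tr O A B) :
  comp (f + f') g = comp f g + comp f' g.
Proof. by have := comp_linl 1 f f' g; rewrite !scale1r. Qed.

Lemma compZl (A B C : sys O) (a : R) (f : Tr O B C) (g : Tr O A B) :
  comp (a *: f) g = a *: comp f g.
Proof. by have := comp_linl a f 0 g; rewrite !addr0 comp0l addr0. Qed.

Lemma comp0r (A B C : sys O) (f : Tr O B C) : comp f (0 : Tr O A B) = 0.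
Proof.
have h := comp_linr 1 f (0 : Tr O A B) 0; rewrite !scale1r !addr0 in h.
exact: self_add.
Qed.

Lemma compBr (A B C : sys O) (f : Tr O B C) (g g' : Tr O A B) :
  comp f (g - g') = comp f g - comp f g'.
Proof.
have := comp_linr (-1) f g' g.
by rewrite scaleN1r addrC => ->; rewrite scaleN1r addrC.
Qed.

Lemma scal0 : scal (0 : Tr O (unitS O) (unitS O)) = 0.
Proof.
have h := scal_lin 1 0 0; rewrite !scale1r !addr0 mul1r in h.
exact: self_add.
Qed.

Lemma scalD (x y : Tr O (unitS O) (unitS O)) : scal (x + y) = scal x + scal y.
Proof. by have := scal_lin 1 x y; rewrite scale1r mul1r. Qed.

Lemma scalZ (a : R) (x : Tr O (unitS O) (unitS O)) : scal (a *: x) = a * scal x.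
Proof. by have := scal_lin a x 0; rewrite !addr0 scal0 addr0. Qed.

Lemma scalB (x y : Tr O (unitS O) (unitS O)) : scal (x - y) = scal x - scal y.
Proof. by have := scal_lin (-1) y x; rewrite scaleN1r addrC => ->; ring. Qed.

Lemma pairingDl (A : sys O) (a b : Tr O A (unitS O)) d :
  pairing (a + b) d = pairing a d + pairing b d.
Proof. by rewrite /pairing compDl scalD. Qed.

Lemma pairing0l (A : sys O) (d : Tr O (unitS O) A) : pairing 0 d = 0.
Proof. by rewrite /pairing comp0l scal0. Qed.

Lemma pairingZl (A : sys O) (k : R) (a : Tr O A (unitS O)) d :
  pairing (k *: a) d = k * pairing a d.
Proof. by rewrite /pairing compZl scalZ. Qed.

Lemma pairingBr (A : sys O) (a : Tr O A (unitS O)) x y :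
  pairing a (x - y) = pairing a x - pairing a y.
Proof. by rewrite /pairing compBr scalB. Qed.

Lemma pairing_suml (A : sys O) (I : Type) (r : seq I) (P : pred I)
  (F : I -> Tr O A (unitS O)) d :
  pairing (\sum_(i <- r | P i) F i) d = \sum_(i <- r | P i) pairing (F i) d.
Proof.
exact: (big_morph (fun a => pairing a d) (fun a b => pairingDl a b d) (pairing0l d)).
Qed.

Lemma channel_comp (A B C : sys O) (f : Tr O A B) (g : Tr O B C) :
  channel f -> channel g -> channel (comp g f).
Proof. by move=> hf hg; have := test_seq hf hg. Qed.

Lemma channel_par (A B C D : sys O) (f : Tr O A B) (g : Tr O C D) :
  channel f -> channel g -> channel (par f g).
Proof. by move=> hf hg; have := test_par hf hg. Qed.

Lemma e_uniq (A : sys O) (a : Tr O A (unitS O)) : channel a -> a = e A.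
Proof. by case: Hsc => _ /(_ A) [_]; apply. Qed.

Lemma e_channel (A : sys O) : channel (e A).
Proof. by case: Hsc => _ /(_ A) []. Qed.

Lemma e_comp (A B : sys O) (k : Tr O A B) : channel k -> comp (e B) k = e A.
Proof. by move=> hk; apply: e_uniq; apply: channel_comp hk (e_channel B). Qed.

Lemma sum_test_e (A : sys O) (t : seq (Tr O A (unitS O))) :
  test t -> (0 < size t)%N -> \sum_(j < size t) t`_j = e A.
Proof.
move=> ht t0; apply: e_uniq.
have := @test_coarse _ _ t 1 (fun _ => 0%N) ht (fun _ _ => isT).
rewrite /coarse /= => /(_ _); apply => j; rewrite ltnS leqn0 => /eqP ->.
by exists 0%N.
Qed.

Lemma test_distr (X : sys O) (u : seq (Tr O (unitS O) X))
  (t : seq (Tr O X (unitS O))) : test u -> test t ->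
  (forall i j, (i < size u)%N -> (j < size t)%N -> 0 <= pairing t`_j u`_i) /\
  \sum_(i < size u) \sum_(j < size t) pairing t`_j u`_i = 1.
Proof.
move=> hu ht; have [h0 h1] := test_scal (test_seq hu ht).
split.
  move=> i j iu jt; apply: h0; apply: allpairs_f; exact: mem_nth.
rewrite -h1 big_allpairs_dep /= (big_nth 0) big_mkord.
apply: eq_bigr => i _; rewrite (big_nth 0) big_mkord.
by apply: eq_bigr.
Qed.

Lemma pairingNl (A : sys O) (a : Tr O A (unitS O)) d :
  pairing (- a) d = - pairing a d.
Proof.
have := pairingDl a (- a) d; rewrite subrr pairing0l => h.
by apply/eqP; rewrite -addr_eq0 addrC -h.
Qed.

Lemma opnorm_ge (X : sys O) (t : seq (Tr O X (unitS O))) (d : Tr O (unitS O) X) :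
  test t -> (0 < size t)%N -> pairing (e X) d = 0 ->
  ((\sum_(j < size t) `|pairing t`_j d|)%:E <= opnorm e d)%E.
Proof.
move=> ht t0 hd.
set D := fun j : nat => pairing t`_j d.
have hsum : \sum_(j < size t) D j = 0.
  by rewrite /D -pairing_suml sum_test_e.
have key : forall a, Eff a -> ((pairing (2%:R *: a - e X) d)%:E <= opnorm e d)%E.
  by move=> a ha; apply: ereal_sup_ubound; exists a.
have val : forall a, pairing (2%:R *: a - e X) d = 2%:R * pairing a d.
  by move=> a; rewrite pairingDl pairingNl pairingZl hd subr0.
have effe : Eff (e X) by exists [:: e X]; split; [exact: e_channel | rewrite mem_head].
case: (pselect ((exists2 j, (j < size t)%N & D j < 0) /\
              (exists2 j, (j < size t)%N & 0 <= D j))) =>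
  [[[j0 j0t j0n] [j1 j1t j1p]]|nomix].
- set f := fun j : nat => if 0 <= D j then 0%N else 1%N.
  have hc := @test_coarse _ _ t 2 f ht.
  have hc' : test (coarse t 2 f).
    apply: hc.
      by move=> i _; rewrite /f; case: ifP.
    move=> j; rewrite ltnS leq_eqVlt ltnS leqn0 => /orP[] /eqP ->.
      by exists j0 => //; rewrite /f leNgt j0n.
    by exists j1 => //; rewrite /f j1p.
  set a := \sum_(j < size t | f j == 0%N) t`_j.
  have effa : Eff a.
    by exists (coarse t 2 f); split => //; rewrite /coarse /= mem_head.
  apply: le_trans (key a effa); rewrite val lee_fin.
  rewrite /a pairing_suml -/D.
  rewrite (bigID (fun j : 'I_(size t) => f j == 0%N)) /=.
  have -> : \sum_(j < size t | f j == 0%N) `|pairing t`_j d| =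
            \sum_(j < size t | f j == 0%N) D j.
    apply: eq_bigr => j; rewrite /f /D; case: ifP => // h _.
    by rewrite ger0_norm.
  have -> : \sum_(j < size t | f j != 0%N) `|pairing t`_j d| =
            - \sum_(j < size t | f j != 0%N) D j.
    rewrite -sumrN; apply: eq_bigr => j; rewrite /f /D; case: ifP => // h _.
    by rewrite ltr0_norm // ltNge h.
  move: hsum; rewrite (bigID (fun j : 'I_(size t) => f j == 0%N)) /=.
  move=> hs; have -> : \sum_(j < size t | f j != 0%N) D j =
     - \sum_(j < size t | f j == 0%N) D j by apply/eqP; rewrite -addr_eq0 addrC hs.
  rewrite opprK; lra.
- have z : \sum_(j < size t) `|pairing t`_j d| = 0.
  have [allneg|allpos] : (forall j, (j < size t)%N -> D j < 0) \/
                         (forall j, (j < size t)%N -> 0 <= D j).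
    case: (pselect (exists2 j, (j < size t)%N & D j < 0)) => hn.
      left => j jt; rewrite ltNge; apply/negP => djp.
      by apply: nomix; split => //; exists j.
    right => j jt; rewrite leNgt; apply/negP => djn.
    by apply: hn; exists j.
    + transitivity (- \sum_(j < size t) D j); last by rewrite hsum oppr0.
      rewrite -sumrN; apply: eq_bigr => j _.
      by rewrite /D ltr0_norm //; apply: allneg.
    + transitivity (\sum_(j < size t) D j); last by rewrite hsum.
      apply: eq_bigr => j _.
      by rewrite /D ger0_norm //; apply: allpos.
  rewrite z; apply: le_trans (key _ effe); by rewrite val hd mulr0.
Qed.

Lemma map_single (X Y : sys O) (k : Tr O Y Y) (s : seq (Tr O X Y)) :
  [seq comp y x | x <- s, y <- [:: k]] = [seq comp k x | x <- s].
Proof. by elim: s => //= x s ->. Qed.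

Lemma Q2C (Ob A : sys O) (rho : Tr O (unitS O) A) (delta : R) : 0 < delta ->
  exists2 eps : R, 0 < eps & forall N M (E : Tr O (sysPow A N) (sysPow Ob M))
    (D : Tr O (sysPow Ob M) (sysPow A N)), channel E -> channel D ->
    (qerror e rho E D < eps%:E)%E -> (cerror e rho E D <= (delta / 2)%:E)%E.
Proof.
move=> d0; have [eps eps0 Hc] := core d0.
exists eps => // N M E D hE hD hq.
apply: ge_ereal_sup => x [C [s [t [hs hdil ht /andP[s2 t2] ->]]]].
rewrite lee_fin /cerrorTerm /=.
set k := par (comp D E) (idt C).
have hk : channel k by apply: channel_par; [exact: channel_comp | exact: test_idt].
have hs' := test_seq hs hk; rewrite map_single in hs'.
have [hp sp] := test_distr hs ht.
have [hq' sq'] := test_distr hs' ht.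
rewrite size_map in hq' sq'.
have s0 : (0 < size s)%N by apply: leq_trans s2.
have t0 : (0 < size t)%N by apply: leq_trans t2.
apply: (Hc (size s) (size t)
   (fun i j => pairing t`_j s`_i) (fun i j => pairing t`_j (comp k s`_i))) => //.
- by move=> i j iu jt; have := hq' i j iu jt; rewrite (nth_map 0).
- rewrite -sq'; apply: eq_bigr => i _; apply: eq_bigr => j _.
  by rewrite (nth_map 0).
- set tau := \sum_(i < size s) _.
  suff : (tau%:E <= qerror e rho E D)%E.
    by move=> h; have := le_lt_trans h hq; rewrite lte_fin.
  have e1 : tau = \sum_(i < size s) \sum_(j < size t)
      `|pairing t`_j (comp k s`_i - s`_i)|.
    by apply: eq_bigr => i _; apply: eq_bigr => j _; rewrite pairingBr distrC.
  rewrite e1 -sumEFin.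
  apply: (@le_trans _ _ (\sum_(i < size s) opnorm e (comp k s`_i - s`_i))%E).
    apply: lee_sum => i _; apply: opnorm_ge => //.
    rewrite pairingBr /pairing comp_assoc e_comp // subrr //.
  apply: ereal_sup_ubound; exists C; exists (\sum_(P <- s) P); exists s.
  split => //.
    split => //; exists s, (nseq (size s) true); split => //.
    by rewrite mask_true.
  by rewrite (big_nth 0) big_mkord.
Qed.

Lemma limn_esup_le (u v : (\bar R)^nat) : (forall n, (u n <= v n)%E) ->
  (limn_esup u <= limn_esup v)%E.
Proof.
move=> uv; rewrite /limn_esup /limf_esup.
apply: le_ereal_inf_tmp => _ [V FV <-].
apply: ge_ereal_inf; exists (ereal_sup (u @` V)); first by exists V.
apply: ge_ereal_sup => _ [n Vn <-].
by apply: le_trans (uv n) _; apply: ereal_sup_ubound; exists n.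
Qed.

Lemma rate_le (P Q : set nat) (c : R) : 0 <= c -> P `<=` Q ->
  (ereal_inf [set (M%:R)%:E | M in Q] * c%:E <=
   ereal_inf [set (M%:R)%:E | M in P] * c%:E)%E.
Proof.
move=> c0 PQ; apply: lee_wpmul2r; first by rewrite lee_fin.
apply: ereal_inf_le_tmp => _ [M PM <-]; exists M => //; exact: PQ.
Qed.

End OPTpart.


Section Final.
Local Open Scope ring_scope.
Local Open Scope classical_set_scope.
Lemma main_aux (R : realType) (O : OPTdata R)
  (e : forall A : sys O, Tr O A (unitS O)) (Ob : sys O)
  (HO : OPT_axioms O) (Hsc : StronglyCausal e)
  (A : sys O) (rho : Tr O (unitS O) A) :
  (infoC e Ob rho <= infoQ e Ob rho)%E.
Proof.

set FC := fun delta => limn_esup (rateC e Ob rho delta).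
set FQ := fun eps => limn_esup (rateQ e Ob rho eps).
have b01 : (BRight (0 : R) < BLeft (1 : R))%O by rewrite bnd_simp.
have ninc : forall (F : R -> \bar R), (forall x y : R, 0 < x -> x <= y -> (F y <= F x)%E) ->
    {in Interval (BRight (0 : R)) (BLeft 1) &, nonincreasing_fun F}.
  move=> F hF x y; rewrite !in_itv /= => /andP[x0 _] _ xy; exact: hF.
have hC : {in Interval (BRight (0 : R)) (BLeft 1) &, nonincreasing_fun FC}.
  apply: ninc => x y x0 xy; apply: limn_esup_le => N; apply: rate_le.
    by rewrite invr_ge0.
  move=> M [E [D [hE hD hc]]]; exists E, D; split => //.
  by apply: lt_le_trans hc _; rewrite lee_fin.
have hQ : {in Interval (BRight (0 : R)) (BLeft 1) &, nonincreasing_fun FQ}.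
  apply: ninc => x y x0 xy; apply: limn_esup_le => N; apply: rate_le.
    by rewrite invr_ge0.
  move=> M [E [D [hE hD hc]]]; exists E, D; split => //.
  by apply: lt_le_trans hc _; rewrite lee_fin.
rewrite /infoC /infoQ -/FC -/FQ.
rewrite (cvg_lim _ (nonincreasing_at_right_cvge _ b01 hC)) //.
rewrite (cvg_lim _ (nonincreasing_at_right_cvge _ b01 hQ)) //.
apply: ge_ereal_sup => xx [delta]; rewrite /= in_itv /= => /andP[d0 d1] <-.
have [eps eps0 Heps] := Q2C HO Hsc Ob rho d0.
set eps' := Num.min eps (2^-1).
have e0 : 0 < eps' by rewrite lt_min eps0 invr_gt0 ltr0n.
have e1 : eps' < 1 by rewrite gt_min; apply/orP; right; rewrite invf_lt1 // ltr1n.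
apply: le_trans (_ : FQ eps' <= _)%E; last first.
  by apply: ereal_sup_ubound; exists eps' => //; rewrite /= in_itv /= e0 e1.
apply: limn_esup_le => N; apply: rate_le; first by rewrite invr_ge0.
move=> M [E [D [hE hD hq]]]; exists E, D; split => //.
apply: le_lt_trans (Heps _ _ E D hE hD _) _.
  by apply: lt_le_trans hq _; rewrite lee_fin ge_min lexx.
by rewrite lte_fin; lra.
Qed.
End Final.

Unset Implicit Arguments.
Theorem mainTheorem7 (R : realType) (O : OPTdata R)
  (e : forall A : sys O, Tr O A (unitS O)) (Ob : sys O)
  (HO : OPT_axioms O) (Hsc : StronglyCausal e) (Hdig : digitalizable Ob)
  (A : sys O) (rho : Tr O (unitS O) A) (Hrho : St1 rho) :
  (infoC e Ob rho <= infoQ e Ob rho)%E.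
Proof. exact: (@main_aux R O e Ob HO Hsc A rho). Qed.
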